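(* Let $N\ge2$, $d\ge1$, and let $\tilde\psi:\mathbb{R}\to\mathbb{R}$ be a positive, bounded, continuous function with $\tilde K:=\|\tilde\psi\|_\infty$. Let $\{t_n\}_{n\in\mathbb{N}_0}$ be an increasing sequence of nonnegative numbers with $t_0=0$, $t_n\to\infty$, and define $\alpha:[0,\infty)\to\{-1,1\}$ by $\alpha(0)=1$, $\alpha(t)=1$ on $(t_{2n},t_{2n+1})$, $\alpha(t)=-1$ on $[t_{2n+1},t_{2n+2}]$, $n\in\mathbb{N}_0$. Assume $t_{2n+2}-t_{2n+1}<\frac{\ln2}{\tilde K}$ for all $n\in\mathbb{N}_0$, $\sum_{p=0}^{\infty}(t_{2p+2}-t_{2p+1})<+\infty$, and $$\sup_{n\in\mathbb{N}_0}\left(\frac{e^{\tilde K(t_{2n+2}-t_{2n+1})}}{2-e^{\tilde K(t_{2n+2}-t_{2n+1})}}\max\left\{1-e^{-\tilde K(t_{2n+1}-t_{2n})},\,1-\frac{\tilde\psi_0}{\tilde K}\big(1-e^{-\tilde K(t_{2n+1}-t_{2n})}\big)\right\}\right)=c<1,$$ where $\tilde\psi_0:=\min_{|y|\le\tilde M^0}\tilde\psi(y)$, $\tilde M^0:=e^{\sum_{p=0}^{\infty}\ln\left(\frac{e^{\tilde K(t_{2p+2}-t_{2p+1})}}{2-e^{\tilde K(t_{2p+2}-t_{2p+1})}}\right)}d(0)$. Then every solution $\{x_i\}$ of $$\frac{d}{dt}x_i(t)=\frac{1}{N-1}\sum_{j\ne i}\alpha(t)\,\tilde\psi(|x_i(t)-x_j(t)|)\,(x_j(t)-x_i(t)),\quad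 t>0,\qquad x_i(0)=x_i^0\in\mathbb{R}^d,$$ satisfies $d(t)\le e^{-\gamma\left(t-\frac{\ln2}{\tilde K}-T\right)}d(0)$ for all $t\ge0$, for suitable positive constants $\gamma$ (independent of $N$) and $T$, where $d(t):=\max_{i,j}|x_i(t)-x_j(t)|$.
   Context: $\mathbb{N}_0=\{0,1,2,\dots\}$. A solution is a continuous function that is $C^1$ on each interval $(t_n,t_{n+1})$ and satisfies the equation there. *)

(* Defs.v *)
From Stdlib Require Import Reals Lra ClassicalDescription.
From Coquelicot Require Import Coquelicot.
Open Scope R_scope.

Fixpoint sumR (n : nat) (f : nat -> R) : R :=
  match n with O => 0 | S m => sumR m f + f m end.

(* finite max of f 0, ..., f (n-1) (and 0); used only for nonnegative values *)
Fixpoint maxR (n : nat) (f : nat -> R) : R :=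
  match n with O => 0 | S m => Rmax (maxR m f) (f m) end.

(* vectors of R^d are functions nat -> R, coordinates k < d; Euclidean norm *)
Definition enorm (d : nat) (v : nat -> R) : R :=
  sqrt (sumR d (fun k => (v k) ^ 2)).

Definition vdist (d : nat) (u v : nat -> R) : R :=
  enorm d (fun k => u k - v k).

Definition alpha (t : nat -> R) (s : R) : R :=
  if excluded_middle_informative
       (exists n : nat, t (2 * n + 1)%nat <= s <= t (2 * n + 2)%nat)
  then -1 else 1.

(* right-hand side, component k, for agent i;  x : agent -> time -> coordinate -> R *)
Definition rhs (N d : nat) (psi : R -> R) (t : nat -> R)
    (x : nat -> R -> nat -> R) (i : nat) (s : R) (k : nat) : R :=
  / (INR N - 1) *
  sumR N (fun j => if Nat.eqb j i then 0 else
     alpha t s * psi (vdist d (x i s) (x j s)) * (x j s k - x i s k)).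

(* solution: continuous on [0,oo) and differentiable on each (t_n, t_{n+1})
   satisfying the equation there (C^1 there follows from the equation) *)
Definition is_solution (N d : nat) (psi : R -> R) (t : nat -> R)
    (x : nat -> R -> nat -> R) : Prop :=
  (forall i k, (i < N)%nat -> (k < d)%nat -> forall s, 0 <= s ->
     filterlim (fun u => x i u k) (within (fun u => 0 <= u) (locally s))
               (locally (x i s k)))
  /\
  (forall n i k, (i < N)%nat -> (k < d)%nat -> forall s, t n < s < t (S n) ->
     is_derive (fun u => x i u k) s (rhs N d psi t x i s k)).

Definition diam (N d : nat) (x : nat -> R -> nat -> R) (s : R) : R :=
  maxR N (fun i => maxR N (fun j => vdist d (x i s) (x j s))).

Definition is_sup_norm (psi : R -> R) (K : R) : Prop :=
  is_lub (fun r => exists y, r = Rabs (psi y)) K.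

Definition is_min_on (psi : R -> R) (M m : R) : Prop :=
  (exists y0, Rabs y0 <= M /\ psi y0 = m) /\
  (forall y, Rabs y <= M -> m <= psi y).

Definition delta (t : nat -> R) (n : nat) : R := t (2 * n + 2)%nat - t (2 * n + 1)%nat.
Definition pos_len (t : nat -> R) (n : nat) : R := t (2 * n + 1)%nat - t (2 * n)%nat.

Definition growth (K : R) (t : nat -> R) (n : nat) : R :=
  exp (K * delta t n) / (2 - exp (K * delta t n)).

Definition M0 (K : R) (t : nat -> R) (D0 : R) : R :=
  exp (Series (fun p => ln (growth K t p))) * D0.

Definition cterm (K psi0 : R) (t : nat -> R) (n : nat) : R :=
  growth K t n *
  Rmax (1 - exp (- K * pos_len t n))
       (1 - psi0 / K * (1 - exp (- K * pos_len t n))).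

(* Main.v *)
Require Import Defs.
From Stdlib Require Import Reals Lra Lia.
From Coquelicot Require Import Coquelicot.
From Stdlib Require Import FunctionalExtensionality ClassicalDescription.
Open Scope R_scope.

Lemma sumR_ext n f g : (forall k, (k < n)%nat -> f k = g k) -> sumR n f = sumR n g.
Proof. induction n; simpl; intros H; auto. rewrite IHn; [rewrite H|]; auto; intros; apply H; lia. Qed.
Lemma sumR_plus n f g : sumR n (fun k => f k + g k) = sumR n f + sumR n g.
Proof. induction n; simpl; [lra|]. rewrite IHn; lra. Qed.
Lemma sumR_scal n c f : sumR n (fun k => c * f k) = c * sumR n f.
Proof. induction n; simpl; [lra|]. rewrite IHn; lra. Qed.
Lemma sumR_minus n f g : sumR n (fun k => f k - g k) = sumR n f - sumR n g.
Proof. induction n; simpl; [lra|]. rewrite IHn; lra. Qed.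
Lemma sumR_le n f g : (forall k, (k < n)%nat -> f k <= g k) -> sumR n f <= sumR n g.
Proof. induction n; simpl; intros H; [lra|]. assert (f n <= g n) by (apply H; lia).
 assert (sumR n f <= sumR n g) by (apply IHn; intros; apply H; lia). lra. Qed.
Lemma sumR_const n c : sumR n (fun _ => c) = INR n * c.
Proof. induction n; simpl sumR; [simpl; lra|]. rewrite IHn, S_INR; lra. Qed.
Lemma sumR_nonneg n f : (forall k, (k < n)%nat -> 0 <= f k) -> 0 <= sumR n f.
Proof. intros H. rewrite <- (Rmult_0_r (INR n)), <- sumR_const. apply sumR_le; auto. Qed.
Lemma sumR_swap n m (f : nat -> nat -> R) :
  sumR n (fun i => sumR m (fun j => f i j)) = sumR m (fun j => sumR n (fun i => f i j)).
Proof. induction n; simpl.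
 - rewrite sumR_const; ring.
 - rewrite IHn, <- sumR_plus. reflexivity. Qed.

Lemma maxR_nonneg n f : 0 <= maxR n f.
Proof. induction n; simpl; [lra|]. eapply Rle_trans; [apply IHn|apply Rmax_l]. Qed.
Lemma maxR_ge n f k : (k < n)%nat -> f k <= maxR n f.
Proof. induction n; intros H; [lia|]. simpl. destruct (Nat.eq_dec k n).
 - subst; apply Rmax_r.
 - eapply Rle_trans; [apply IHn; lia|apply Rmax_l]. Qed.
Lemma maxR_le n f c : 0 <= c -> (forall k, (k < n)%nat -> f k <= c) -> maxR n f <= c.
Proof. induction n; simpl; intros H0 H; auto. apply Rmax_lub; [apply IHn; auto|apply H; lia]. Qed.

Lemma maxR_sqrt n f : (forall k, (k < n)%nat -> 0 <= f k) ->
  maxR n (fun k => sqrt (f k)) = sqrt (maxR n f).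
Proof. induction n; simpl; intros H. { now rewrite sqrt_0. }
 rewrite IHn by (intros; apply H; lia).
 assert (0 <= f n) by (apply H; lia). pose proof (maxR_nonneg n f).
 unfold Rmax. destruct (Rle_dec (sqrt (maxR n f)) (sqrt (f n))) as [h1|h1];
 destruct (Rle_dec (maxR n f) (f n)) as [h2|h2]; auto.
 - apply Rle_antisym; auto. apply sqrt_le_1_alt. lra.
 - exfalso. apply h1. apply sqrt_le_1_alt; lra. Qed.

Definition Cw (f : R -> R) (s : R) : Prop :=
  forall e, 0 < e -> exists dl, 0 < dl /\ forall u, 0 <= u -> Rabs (u - s) < dl -> Rabs (f u - f s) < e.

Lemma Cw_of_filterlim f s :
  filterlim f (within (fun u => 0 <= u) (locally s)) (locally (f s)) -> Cw f s.
Proof. intros H e He. apply filterlim_locally with (eps := mkposreal e He) in H.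
 destruct H as [[dl Hdl] H]. exists dl; split; auto. intros u Hu Hus.
 apply (H u); auto. Qed.

Lemma Cw_const c s : Cw (fun _ => c) s.
Proof. intros e He. exists 1; split; [lra|]. intros. unfold Rminus; rewrite Rplus_opp_r, Rabs_R0; lra. Qed.

Lemma Cw_plus f g s : Cw f s -> Cw g s -> Cw (fun u => f u + g u) s.
Proof. intros Hf Hg e He. destruct (Hf (e/2)) as [d1 [H1 H1']]; [lra|].
 destruct (Hg (e/2)) as [d2 [H2 H2']]; [lra|].
 exists (Rmin d1 d2); split; [apply Rmin_pos; auto|]. intros u Hu Hus.
 pose proof (Rmin_l d1 d2); pose proof (Rmin_r d1 d2).
 specialize (H1' u Hu ltac:(lra)). specialize (H2' u Hu ltac:(lra)).
 replace (f u + g u - (f s + g s)) with ((f u - f s) + (g u - g s)) by ring.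
 eapply Rle_lt_trans; [apply Rabs_triang|]. lra. Qed.

Lemma Cw_opp f s : Cw f s -> Cw (fun u => - f u) s.
Proof. intros Hf e He. destruct (Hf e He) as [d [H1 H2]]. exists d; split; auto.
 intros u Hu Hus. replace (- f u - - f s) with (-(f u - f s)) by ring. rewrite Rabs_Ropp; auto. Qed.

Lemma Cw_mult f g s : Cw f s -> Cw g s -> Cw (fun u => f u * g u) s.
Proof. intros Hf Hg e He.
 set (A := Rabs (f s) + 1). set (Bg := Rabs (g s) + 1).
 assert (HA : 0 < A) by (unfold A; pose proof (Rabs_pos (f s)); lra).
 assert (HB : 0 < Bg) by (unfold Bg; pose proof (Rabs_pos (g s)); lra).
 destruct (Hf (Rmin 1 (e / (2 * Bg)))) as [d1 [H1 H1']].
 { apply Rmin_pos; [lra|]. apply Rdiv_lt_0_compat; lra. }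
 destruct (Hg (e / (2 * (A + 1)))) as [d2 [H2 H2']]. { apply Rdiv_lt_0_compat; lra. }
 exists (Rmin d1 d2); split; [apply Rmin_pos; auto|]. intros u Hu Hus.
 pose proof (Rmin_l d1 d2); pose proof (Rmin_r d1 d2).
 specialize (H1' u Hu ltac:(lra)). specialize (H2' u Hu ltac:(lra)).
 pose proof (Rmin_l 1 (e / (2 * Bg))); pose proof (Rmin_r 1 (e / (2 * Bg))).
 replace (f u * g u - f s * g s) with (f u * (g u - g s) + (f u - f s) * g s) by ring.
 eapply Rle_lt_trans; [apply Rabs_triang|]. rewrite !Rabs_mult.
 assert (Hfu : Rabs (f u) <= A + 1).
 { replace (f u) with ((f u - f s) + f s) by ring. eapply Rle_trans; [apply Rabs_triang|]. unfold A; lra. }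
 assert (E1 : Rabs (f u) * Rabs (g u - g s) <= (A+1) * (e / (2 * (A + 1)))).
 { apply Rmult_le_compat; try apply Rabs_pos; lra. }
 assert (E2 : Rabs (f u - f s) * Rabs (g s) < e / 2).
 { apply Rle_lt_trans with (Rabs (f u - f s) * Bg).
   - apply Rmult_le_compat_l; [apply Rabs_pos|unfold Bg; lra].
   - replace (e/2) with ((e / (2 * Bg)) * Bg) by (field; lra).
     apply Rmult_lt_compat_r; lra. }
 assert (E3 : (A+1) * (e / (2 * (A + 1))) = e/2) by (field; lra).
 lra. Qed.

Lemma Rabs_Rmax_diff a b c d : Rabs (Rmax a b - Rmax c d) <= Rmax (Rabs (a - c)) (Rabs (b - d)).
Proof. unfold Rmax at 1 2. destruct (Rle_dec a b); destruct (Rle_dec c d);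
 apply Rabs_le; pose proof (Rmax_l (Rabs (a - c)) (Rabs (b - d))); pose proof (Rmax_r (Rabs (a - c)) (Rabs (b - d)));
 pose proof (Rabs_le_between (a - c)) ; pose proof (Rabs_le_between (b - d));
 pose proof (Rle_abs (a-c)); pose proof (Rle_abs (b-d)); pose proof (Rabs_Ropp (a-c)); pose proof (Rabs_Ropp (b-d));
 pose proof (Rle_abs (-(a-c))); pose proof (Rle_abs (-(b-d))); split; lra. Qed.

Lemma Cw_Rmax f g s : Cw f s -> Cw g s -> Cw (fun u => Rmax (f u) (g u)) s.
Proof. intros Hf Hg e He. destruct (Hf e He) as [d1 [H1 H1']]. destruct (Hg e He) as [d2 [H2 H2']].
 exists (Rmin d1 d2); split; [apply Rmin_pos; auto|]. intros u Hu Hus.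
 pose proof (Rmin_l d1 d2); pose proof (Rmin_r d1 d2).
 specialize (H1' u Hu ltac:(lra)). specialize (H2' u Hu ltac:(lra)).
 eapply Rle_lt_trans; [apply Rabs_Rmax_diff|]. unfold Rmax; destruct Rle_dec; auto. Qed.

Lemma Cw_sumR n (f : nat -> R -> R) s : (forall k, (k < n)%nat -> Cw (f k) s) -> Cw (fun u => sumR n (fun k => f k u)) s.
Proof. induction n; simpl; intros H. apply Cw_const.
 apply (Cw_plus (fun u => sumR n (fun k => f k u)) (f n)); [apply IHn; intros; apply H; lia| apply H; lia]. Qed.

Lemma Cw_maxR n (f : nat -> R -> R) s : (forall k, (k < n)%nat -> Cw (f k) s) -> Cw (fun u => maxR n (fun k => f k u)) s.
Proof. induction n; simpl; intros H. apply Cw_const.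
 apply (Cw_Rmax (fun u => maxR n (fun k => f k u)) (f n)); [apply IHn; intros; apply H; lia| apply H; lia]. Qed.

Lemma Cw_of_continuous f s : continuous f s -> Cw f s.
Proof. intros H e He. apply filterlim_locally with (eps := mkposreal e He) in H.
 destruct H as [[dl Hdl] H]. exists dl; split; auto. intros u Hu Hus. apply (H u); auto. Qed.


Definition Sq (d : nat) (y : nat -> nat -> R) (i j : nat) : R :=
  sumR d (fun k => (y i k - y j k) ^ 2).
Definition ip (d : nat) (v w : nat -> R) : R := sumR d (fun k => v k * w k).

Definition Rhs (N d : nat) (al : R) (a : nat -> nat -> R) (y : nat -> nat -> R) (p k : nat) : R :=
  / (INR N - 1) * sumR N (fun l => if Nat.eqb l p then 0 else al * a p l * (y l k - y p k)).

Lemma Sq_nonneg d y i j : 0 <= Sq d y i j.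
Proof. apply sumR_nonneg; intros; apply pow2_ge_0. Qed.
Lemma Sq_diag d y i : Sq d y i i = 0.
Proof. unfold Sq. rewrite (sumR_ext _ _ (fun _ => 0)). rewrite sumR_const; ring. intros; ring. Qed.
Lemma Sq_sym d y i j : Sq d y i j = Sq d y j i.
Proof. unfold Sq. apply sumR_ext; intros; ring. Qed.

Lemma Y_id d y i j l :
  2 * ip d (fun k => y i k - y j k) (fun k => y l k - y j k) = Sq d y i j + Sq d y l j - Sq d y l i.
Proof. unfold ip, Sq. rewrite <- sumR_plus, <- sumR_minus, <- sumR_scal. apply sumR_ext; intros; ring. Qed.
Lemma X_id d y i j l :
  ip d (fun k => y i k - y j k) (fun k => y l k - y i k) =
  ip d (fun k => y i k - y j k) (fun k => y l k - y j k) - Sq d y i j.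
Proof. unfold ip, Sq. rewrite <- sumR_minus. apply sumR_ext; intros; ring. Qed.

Lemma decomp N d al a y i j :
  sumR d (fun k => 2 * (y i k - y j k) * (Rhs N d al a y i k - Rhs N d al a y j k)) =
  2 * / (INR N - 1) * sumR N (fun l =>
     (if Nat.eqb l i then 0 else al * a i l * ip d (fun k => y i k - y j k) (fun k => y l k - y i k))
   - (if Nat.eqb l j then 0 else al * a j l * ip d (fun k => y i k - y j k) (fun k => y l k - y j k))).
Proof.
  unfold Rhs, ip.
  transitivity (sumR d (fun k => 2 * / (INR N - 1) * sumR N (fun l =>
     (y i k - y j k) * (if Nat.eqb l i then 0 else al * a i l * (y l k - y i k))
   - (y i k - y j k) * (if Nat.eqb l j then 0 else al * a j l * (y l k - y j k))))).
  { apply sumR_ext; intros k _. rewrite sumR_minus, !sumR_scal. ring. }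
  rewrite sumR_scal. f_equal. rewrite sumR_swap. apply sumR_ext; intros l _.
  rewrite sumR_minus. f_equal.
  - destruct (Nat.eqb l i). { rewrite (sumR_ext _ _ (fun _ => 0)); [rewrite sumR_const; ring|intros; ring]. }
    rewrite <- sumR_scal. apply sumR_ext; intros; ring.
  - destruct (Nat.eqb l j). { rewrite (sumR_ext _ _ (fun _ => 0)); [rewrite sumR_const; ring|intros; ring]. }
    rewrite <- sumR_scal. apply sumR_ext; intros; ring.
Qed.

Lemma INR_ge2 N : (2 <= N)%nat -> 2 <= INR N.
Proof. intros H. apply le_INR in H. simpl in H. lra. Qed.

Lemma core_bound N d al a y i j lo hi :
  (2 <= N)%nat -> (i < N)%nat -> (j < N)%nat ->
  (forall l l', (l < N)%nat -> (l' < N)%nat -> Sq d y l l' <= Sq d y i j) ->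
  (forall p l, (p < N)%nat -> (l < N)%nat -> lo <= a p l <= hi) -> 0 <= lo ->
  (al = 1 -> sumR d (fun k => 2 * (y i k - y j k) * (Rhs N d al a y i k - Rhs N d al a y j k))
              <= - 2 * lo * Sq d y i j) /\
  (al = -1 -> sumR d (fun k => 2 * (y i k - y j k) * (Rhs N d al a y i k - Rhs N d al a y j k))
              <= 4 * hi * Sq d y i j).
Proof.
  intros HN Hi Hj Hmax Ha Hlo. rewrite decomp.
  set (Z := Sq d y i j). assert (HZ : 0 <= Z) by apply Sq_nonneg.
  pose proof (INR_ge2 N HN) as HN2.
  set (c := / (INR N - 1)).
  assert (Hc : 0 < c) by (unfold c; apply Rinv_0_lt_compat; lra).
  assert (HcN1 : 1 <= c * INR N) by (unfold c; apply (Rmult_le_reg_l (INR N - 1)); [lra|]; field_simplify; lra).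
  assert (HcN2 : c * INR N <= 2) by (unfold c; apply (Rmult_le_reg_l (INR N - 1)); [lra|]; field_simplify; lra).
  assert (Hfacts : forall l, (l < N)%nat ->
     let Y := ip d (fun k => y i k - y j k) (fun k => y l k - y j k) in
     let X := ip d (fun k => y i k - y j k) (fun k => y l k - y i k) in
     0 <= Y <= Z /\ X = Y - Z /\ (l = i -> X = 0) /\ (l = j -> Y = 0)).
  { intros l Hl Y X. pose proof (Y_id d y i j l) as E. fold Y in E. fold Z in E.
    pose proof (X_id d y i j l) as E2. fold X Y Z in E2.
    pose proof (Hmax l j Hl Hj). pose proof (Hmax l i Hl Hi). pose proof (Sq_nonneg d y l j). pose proof (Sq_nonneg d y l i).
    clearbody Y X.
    repeat match goal with H : context [Sq d y i j] |- _ => fold Z in H end; split; [split; lra|]. split; [auto|]. split.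
    - intros ->. rewrite Sq_diag in E. fold Z in E. lra.
    - intros ->. rewrite Sq_diag in E. rewrite Sq_sym in E. fold Z in E. lra. }
  split; intros Hal; subst al.
  - assert (Hs : sumR N (fun l =>
     (if Nat.eqb l i then 0 else 1 * a i l * ip d (fun k => y i k - y j k) (fun k => y l k - y i k))
   - (if Nat.eqb l j then 0 else 1 * a j l * ip d (fun k => y i k - y j k) (fun k => y l k - y j k)))
     <= sumR N (fun _ => - lo * Z)).
    { apply sumR_le. intros l Hl. destruct (Hfacts l Hl) as [[HY1 HY2] [HX [HXi HYj]]].
      set (Y := ip d (fun k => y i k - y j k) (fun k => y l k - y j k)) in *.
      set (X := ip d (fun k => y i k - y j k) (fun k => y l k - y i k)) in *.
      destruct (Ha i l Hi Hl) as [A1 A2]. destruct (Ha j l Hj Hl) as [B1 B2].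
      assert (HX0 : X <= 0) by lra.
      assert (P1 : (if Nat.eqb l i then 0 else 1 * a i l * X) <= lo * X).
      { destruct (Nat.eqb_spec l i). { rewrite (HXi e). lra. } nra. }
      assert (P2 : - (if Nat.eqb l j then 0 else 1 * a j l * Y) <= - lo * Y).
      { destruct (Nat.eqb_spec l j). { rewrite (HYj e). lra. } nra. }
      assert (lo * X = lo * Y - lo * Z) by (rewrite HX; ring). lra. }
    rewrite sumR_const in Hs. fold c.
    assert (0 <= lo * Z) by nra. nra.
  - assert (Hs : sumR N (fun l =>
     (if Nat.eqb l i then 0 else -1 * a i l * ip d (fun k => y i k - y j k) (fun k => y l k - y i k))
   - (if Nat.eqb l j then 0 else -1 * a j l * ip d (fun k => y i k - y j k) (fun k => y l k - y j k)))
     <= sumR N (fun _ => hi * Z)).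
    { apply sumR_le. intros l Hl. destruct (Hfacts l Hl) as [[HY1 HY2] [HX [HXi HYj]]].
      set (Y := ip d (fun k => y i k - y j k) (fun k => y l k - y j k)) in *.
      set (X := ip d (fun k => y i k - y j k) (fun k => y l k - y i k)) in *.
      destruct (Ha i l Hi Hl) as [A1 A2]. destruct (Ha j l Hj Hl) as [B1 B2].
      assert (HX0 : X <= 0) by lra.
      assert (P1 : (if Nat.eqb l i then 0 else -1 * a i l * X) <= - hi * X).
      { destruct (Nat.eqb_spec l i). { rewrite (HXi e). lra. } nra. }
      assert (P2 : - (if Nat.eqb l j then 0 else -1 * a j l * Y) <= hi * Y).
      { destruct (Nat.eqb_spec l j). { rewrite (HYj e). lra. } nra. }
      assert (hi * X = hi * Y - hi * Z) by (rewrite HX; ring). lra. }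
    rewrite sumR_const in Hs. fold c.
    assert (0 <= hi) by (destruct (Ha i i Hi Hi); lra).
    assert (0 <= hi * Z) by nra. nra.
Qed.


Lemma dini_mono (h : R -> R) a b :
  a <= b ->
  (forall s, a <= s <= b -> forall e, 0 < e -> exists dl, 0 < dl /\
      forall u, a <= u <= b -> Rabs (u - s) < dl -> Rabs (h u - h s) < e) ->
  (forall s, a < s < b -> forall e, 0 < e -> exists eta, 0 < eta /\
      forall u, s < u < s + eta -> h u <= h s + e * (u - s)) ->
  h b <= h a.
Proof.
  intros Hab Hc Hd.
  assert (key : forall e, 0 < e -> h b <= h a + e + e * (b - a)).
  { intros e He.
    set (P := fun s => forall u, a <= u <= s -> h u <= h a + e + e * (u - a)).
    set (E := fun s => a <= s <= b /\ P s).
    assert (HEa : E a).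
    { split; [lra|]. intros u Hu. replace u with a by lra. lra. }
    assert (Hbd : bound E). { exists b. intros s [Hs _]. lra. }
    destruct (completeness E Hbd (ex_intro _ a HEa)) as [sg [Hub Hlub]].
    assert (Hasg : a <= sg) by (apply Hub; auto).
    assert (Hsgb : sg <= b) by (apply Hlub; intros s [Hs _]; lra).
    assert (Hlt : forall u, a <= u < sg -> h u <= h a + e + e * (u - a)).
    { intros u Hu. destruct (Rle_dec (h u) (h a + e + e * (u - a))) as [ok|ko]; auto.
      exfalso. assert (sg <= u).
      { apply Hlub. intros s [Hs Ps]. destruct (Rle_dec u s) as [l|l].
        - exfalso. apply ko. apply Ps. lra.
        - lra. }
      lra. }
    assert (Hsg : h sg <= h a + e + e * (sg - a)).
    { destruct (Rle_dec (h sg) (h a + e + e * (sg - a))) as [ok|ko]; auto.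
      exfalso. destruct (Req_dec sg a) as [Eq|Neq].
      { subst sg. lra. }
      set (k := h sg - (h a + e + e * (sg - a))).
      destruct (Hc sg ltac:(lra) k ltac:(unfold k; lra)) as [dl [Hdl Hdl']].
      set (u := Rmax a (sg - dl/2)).
      assert (Hu1 : a <= u) by apply Rmax_l.
      assert (Hu2 : sg - dl/2 <= u) by apply Rmax_r.
      assert (Hu3 : u < sg) by (unfold u, Rmax; destruct Rle_dec; lra).
      specialize (Hdl' u ltac:(lra) ltac:(apply Rabs_def1; lra)).
      specialize (Hlt u ltac:(lra)).
      apply Rabs_def2 in Hdl'. unfold k in Hdl'.
      assert (e * (u - a) <= e * (sg - a)) by (apply Rmult_le_compat_l; lra).
      lra. }
    assert (HPsg : P sg).
    { intros u Hu. destruct (Req_dec u sg) as [->|Hne]; auto. apply Hlt; lra. }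
    assert (Hsgb' : sg = b).
    { destruct (Req_dec sg b) as [ok|ko]; auto. exfalso.
      destruct (Req_dec sg a) as [Eq|Neq].
      - subst sg.
        destruct (Hc a ltac:(lra) e He) as [dl [Hdl Hdl']].
        set (s' := Rmin (a + dl/2) b).
        assert (s' <= a + dl/2) by apply Rmin_l. assert (s' <= b) by apply Rmin_r.
        assert (a < s') by (unfold s', Rmin; destruct Rle_dec; lra).
        assert (E s').
        { split; [lra|]. intros u Hu.
          specialize (Hdl' u ltac:(lra) ltac:(apply Rabs_def1; lra)).
          apply Rabs_def2 in Hdl'.
          assert (0 <= e * (u - a)) by (apply Rmult_le_pos; lra). lra. }
        assert (s' <= a) by (apply Hub; auto). lra.
      - destruct (Hd sg ltac:(lra) e He) as [eta [Heta Heta']].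
        set (s' := Rmin (sg + eta/2) b).
        assert (s' <= sg + eta/2) by apply Rmin_l. assert (s' <= b) by apply Rmin_r.
        assert (sg < s') by (unfold s', Rmin; destruct Rle_dec; lra).
        assert (E s').
        { split; [lra|]. intros u Hu.
          destruct (Rle_dec u sg) as [l|l]. { apply HPsg; lra. }
          specialize (Heta' u ltac:(lra)).
          replace (h a + e + e * (u - a)) with ((h a + e + e * (sg - a)) + e * (u - sg)) by ring.
          lra. }
        assert (s' <= sg) by (apply Hub; auto). lra. }
    subst sg. apply HPsg. lra. }
  destruct (Rle_dec (h b) (h a)) as [ok|ko]; auto. exfalso.
  set (e := (h b - h a) / (2 * (1 + (b - a)))).
  assert (He : 0 < e) by (unfold e; apply Rdiv_lt_0_compat; lra).
  specialize (key e He).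
  assert (e + e * (b - a) = (h b - h a) / 2) by (unfold e; field; lra).
  lra.
Qed.


Lemma maxR_scal c n f : 0 <= c -> c * maxR n f = maxR n (fun k => c * f k).
Proof. intros Hc. induction n; simpl. ring. rewrite Rmult_max_distr_l by auto. now rewrite IHn. Qed.

Lemma maxR_local n (f : nat -> R -> R) v H e : 0 <= H -> 0 < e ->
  (forall q, (q < n)%nat -> exists eta, 0 < eta /\ forall u, v < u < v + eta -> f q u <= H + e * (u - v)) ->
  exists eta, 0 < eta /\ forall u, v < u < v + eta -> maxR n (fun q => f q u) <= H + e * (u - v).
Proof. intros H0 He. induction n; intros Hq.
 - exists 1. split; [lra|]. intros u Hu. simpl. assert (0 <= e * (u - v)) by (apply Rmult_le_pos; lra). lra.
 - destruct IHn as [e1 [He1 H1]]. { intros; apply Hq; lia. }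
   destruct (Hq n ltac:(lia)) as [e2 [He2 H2]].
   exists (Rmin e1 e2). split. { apply Rmin_pos; auto. }
   intros u Hu. pose proof (Rmin_l e1 e2); pose proof (Rmin_r e1 e2). simpl.
   apply Rmax_lub; [apply H1|apply H2]; lra. Qed.

Lemma deriv_upper F v D e : is_derive F v D -> 0 < e ->
  exists eta, 0 < eta /\ forall u, v < u < v + eta -> F u <= F v + (D + e) * (u - v).
Proof. intros HD He. apply is_derive_Reals in HD. destruct (HD e He) as [[dl Hdl] Hd].
 exists dl. split; auto. intros u Hu. specialize (Hd (u - v) ltac:(lra)).
 assert (Rabs (u - v) < dl) by (rewrite Rabs_right; simpl; lra). specialize (Hd H).
 replace (v + (u - v)) with u in Hd by ring. apply Rabs_def2 in Hd.
 destruct Hd as [Hd _]. assert (Hp : 0 < u - v) by lra.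
 assert (F u - F v < (D + e) * (u - v)).
 { apply (Rmult_lt_compat_r (u - v)) in Hd; auto. field_simplify in Hd; [|lra]. lra. }
 lra. Qed.

Section Sol.
Variables (N d : nat) (psi : R -> R) (t : nat -> R) (x : nat -> R -> nat -> R).

Definition Sqx (s : R) (i j : nat) : R := Sq d (fun l k => x l s k) i j.
Definition G (s : R) : R := maxR N (fun i => maxR N (fun j => Sqx s i j)).
Definition dSq (s : R) (i j : nat) : R :=
  sumR d (fun k => 2 * (x i s k - x j s k) * (rhs N d psi t x i s k - rhs N d psi t x j s k)).

Lemma G_nonneg s : 0 <= G s.
Proof. apply maxR_nonneg. Qed.
Lemma Sqx_le_G s i j : (i < N)%nat -> (j < N)%nat -> Sqx s i j <= G s.
Proof. intros Hi Hj. unfold G. eapply Rle_trans; [|apply (maxR_ge _ _ i Hi)].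
 apply (maxR_ge _ (fun j => Sqx s i j) j Hj). Qed.

Lemma derive_Sqx s i j :
  (forall l k, (l < N)%nat -> (k < d)%nat -> is_derive (fun u => x l u k) s (rhs N d psi t x l s k)) ->
  (i < N)%nat -> (j < N)%nat -> is_derive (fun u => Sqx u i j) s (dSq s i j).
Proof. intros HD Hi Hj. unfold Sqx, Sq, dSq.
 assert (forall m, (m <= d)%nat -> is_derive (fun u => sumR m (fun k => (x i u k - x j u k) ^ 2)) s
    (sumR m (fun k => 2 * (x i s k - x j s k) * (rhs N d psi t x i s k - rhs N d psi t x j s k)))).
 { induction m; intros Hm; simpl.
   - apply is_derive_Reals, derivable_pt_lim_const.
   - apply (is_derive_plus (fun u => sumR m (fun k => (x i u k - x j u k) ^ 2)) (fun u => (x i u m - x j u m) ^ 2)).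
     { apply IHm; lia. }
     pose proof (is_derive_pow (fun u => x i u m - x j u m) 2 s _
        (is_derive_minus (fun u => x i u m) (fun u => x j u m) s _ _ (HD i m Hi ltac:(lia)) (HD j m Hj ltac:(lia)))) as P.
     simpl in P. unfold minus, plus, opp in P; simpl in P.
     replace (2 * (x i s m - x j s m) * (rhs N d psi t x i s m - rhs N d psi t x j s m))
       with ((1 + 1) * (rhs N d psi t x i s m + - rhs N d psi t x j s m) * ((x i s m + - x j s m) * 1)) by ring.
     revert P. apply is_derive_ext. intros; simpl; ring. }
 apply H. lia. Qed.

Lemma Cw_G s :
  (forall l k, (l < N)%nat -> (k < d)%nat -> forall s, 0 <= s -> Cw (fun u => x l u k) s) ->
  0 <= s -> Cw G s.
Proof. intros HC Hs. unfold G. apply (Cw_maxR N (fun i u => maxR N (fun j => Sqx u i j))). intros i Hi.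
 apply (Cw_maxR N (fun j u => Sqx u i j)). intros j Hj. unfold Sqx, Sq.
 apply (Cw_sumR d (fun k u => (x i u k - x j u k) ^ 2)). intros k Hk. simpl.
 apply (Cw_mult (fun u => x i u k - x j u k) (fun u => (x i u k - x j u k) * 1)).
 - apply (Cw_plus (fun u => x i u k) (fun u => - x j u k)); [apply HC; auto|apply Cw_opp, HC; auto].
 - apply (Cw_mult (fun u => x i u k - x j u k) (fun _ => 1)); [|apply Cw_const].
   apply (Cw_plus (fun u => x i u k) (fun u => - x j u k)); [apply HC; auto|apply Cw_opp, HC; auto].
Qed.

Lemma interval_bound a b r :
  0 <= a <= b ->
  (forall l k, (l < N)%nat -> (k < d)%nat -> forall s, 0 <= s -> Cw (fun u => x l u k) s) ->
  (forall l k, (l < N)%nat -> (k < d)%nat -> forall s, a < s < b ->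
      is_derive (fun u => x l u k) s (rhs N d psi t x l s k)) ->
  (forall s, a < s < b -> forall i j, (i < N)%nat -> (j < N)%nat -> Sqx s i j = G s -> dSq s i j <= 2 * r * G s) ->
  forall s, a <= s <= b -> G s <= G a * exp (2 * r * (s - a)).
Proof.
  intros Hab HC HD Hrate s Hs.
  set (e := fun u => exp (-2 * r * (u - a))).
  set (h := fun u => e u * G u).
  assert (He : forall u, 0 < e u) by (intros; apply exp_pos).
  assert (Hde : forall u, is_derive e u (-2 * r * e u)).
  { intros u. unfold e. auto_derive; auto. replace (u + - a) with (u - a) by ring. ring. }
  assert (Hmono : h s <= h a).
  { apply dini_mono. lra.
    - intros v Hv eps Heps.
      assert (Cw h v).
      { apply Cw_mult. apply Cw_of_continuous. apply (ex_derive_continuous (K:=R_AbsRing) (V:=R_NormedModule) e). eexists; apply Hde.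
        apply Cw_G; auto; lra. }
      destruct (H eps Heps) as [dl [Hdl H']]. exists dl; split; auto. intros u Hu Hu'. apply H'; auto; lra.
    - intros v Hv eps Heps.
      assert (Hh : forall u, h u = maxR N (fun i => maxR N (fun j => e u * Sqx u i j))).
      { intros u. unfold h, G. rewrite maxR_scal by (left; apply He). f_equal. apply functional_extensionality; intros i.
        apply maxR_scal; left; apply He. }
      assert (Hhv : 0 <= h v) by (unfold h; apply Rmult_le_pos; [left; apply He|apply G_nonneg]).
      assert (Hfin : exists eta, 0 < eta /\ forall u, v < u < v + eta ->
                maxR N (fun i => maxR N (fun j => e u * Sqx u i j)) <= h v + eps * (u - v)).
      2:{ destruct Hfin as [eta [H1 H2]]. exists eta; split; auto. intros u Hu. rewrite Hh. apply H2; auto. }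
      apply (maxR_local N (fun i u => maxR N (fun j => e u * Sqx u i j))); auto.
      intros i Hi.
      apply (maxR_local N (fun j u => e u * Sqx u i j)); auto.
      unfold h in Hhv |- *.
      intros j Hj.
      assert (HDF : is_derive (fun u => e u * Sqx u i j) v (-2 * r * e v * Sqx v i j + e v * dSq v i j)).
      { pose proof (is_derive_mult e (fun u => Sqx u i j) v _ _ (Hde v)
           (derive_Sqx v i j (fun l k Hl Hk => HD l k Hl Hk v ltac:(lra)) Hi Hj) ltac:(intros; apply Rmult_comm)) as P.
        assert (Eqv : plus (mult (-2*r*e v) (Sqx v i j)) (mult (e v) (dSq v i j)) = -2*r*e v*Sqx v i j + e v*dSq v i j)
          by (unfold plus, mult; simpl; ring). rewrite <- Eqv. exact P. }
      pose proof (Sqx_le_G v i j Hi Hj) as Hle. pose proof (He v) as Hev.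
      destruct (Req_dec (Sqx v i j) (G v)) as [Eq|Neq].
      + destruct (deriv_upper _ v _ eps HDF Heps) as [eta [Heta Heta']].
        exists eta; split; auto. intros u Hu. specialize (Heta' u Hu).
        pose proof (Hrate v ltac:(lra) i j Hi Hj Eq) as R1.
        assert (-2 * r * e v * Sqx v i j + e v * dSq v i j <= 0).
        { rewrite Eq. assert (e v * dSq v i j <= e v * (2 * r * G v)) by (apply Rmult_le_compat_l; lra). lra. }
        assert (e v * Sqx v i j <= e v * G v) by (apply Rmult_le_compat_l; lra).
        assert ((-2 * r * e v * Sqx v i j + e v * dSq v i j) * (u - v) <= 0) by (apply Rmult_le_0_r; lra).
        simpl in *. nra.
      + set (D := -2 * r * e v * Sqx v i j + e v * dSq v i j) in HDF.
        destruct (deriv_upper _ v _ 1 HDF ltac:(lra)) as [eta [Heta Heta']].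
        assert (Hgap : 0 < e v * G v - e v * Sqx v i j).
        { assert (Sqx v i j < G v) by lra. nra. }
        set (eta' := Rmin eta ((e v * G v - e v * Sqx v i j) / (Rabs D + 1))).
        assert (0 < eta').
        { apply Rmin_pos; auto. apply Rdiv_lt_0_compat; auto. pose proof (Rabs_pos D); lra. }
        exists eta'; split; auto. intros u Hu.
        assert (eta' <= eta) by apply Rmin_l.
        assert (eta' <= (e v * G v - e v * Sqx v i j) / (Rabs D + 1)) by apply Rmin_r.
        specialize (Heta' u ltac:(lra)).
        pose proof (Rle_abs D).
        assert ((D + 1) * (u - v) <= (Rabs D + 1) * (u - v)) by (apply Rmult_le_compat_r; lra).
        assert ((Rabs D + 1) * (u - v) <= e v * G v - e v * Sqx v i j).
        { replace (e v * G v - e v * Sqx v i j) with ((Rabs D + 1) * ((e v * G v - e v * Sqx v i j) / (Rabs D + 1)))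
            by (field; pose proof (Rabs_pos D); lra).
          apply Rmult_le_compat_l; [pose proof (Rabs_pos D); lra|]. lra. }
        assert (0 <= eps * (u - v)) by (apply Rmult_le_pos; lra).
        simpl in *. lra. }
  unfold h, e in Hmono. replace (a - a) with 0 in Hmono by ring.
  rewrite Rmult_0_r, exp_0, Rmult_1_l in Hmono.
  assert (Hexp : exp (2 * r * (s - a)) * exp (-2 * r * (s - a)) = 1).
  { rewrite <- exp_plus. replace (2 * r * (s - a) + -2 * r * (s - a)) with 0 by ring. apply exp_0. }
  assert (0 < exp (2 * r * (s - a))) by apply exp_pos.
  replace (G s) with (exp (2 * r * (s - a)) * (exp (-2 * r * (s - a)) * G s)) by (rewrite <- Rmult_assoc, Hexp; ring).
  rewrite Rmult_comm. apply Rmult_le_compat_r; lra.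
Qed.
End Sol.

Lemma exp_le a b : a <= b -> exp a <= exp b.
Proof. intros H. destruct (Rle_lt_or_eq_dec _ _ H) as [L|E]; [left; apply exp_increasing; exact L|right; rewrite E; reflexivity]. Qed.

Lemma maxR_ext n f g : (forall k, (k < n)%nat -> f k = g k) -> maxR n f = maxR n g.
Proof. induction n; simpl; intros H; auto. rewrite IHn; [rewrite H|]; auto; intros; apply H; lia. Qed.

Lemma t_mono (t : nat -> R) : (forall n, t n < t (S n)) -> forall m n, (m < n)%nat -> t m < t n.
Proof. intros H m n Hmn. induction n; [lia|]. destruct (Nat.eq_dec m n) as [->|Hne]; auto.
 eapply Rlt_trans; [apply IHn; lia|apply H]. Qed.

Lemma alpha_pos t n s : (forall n, t n < t (S n)) -> t (2 * n)%nat < s < t (2 * n + 1)%nat -> alpha t s = 1.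
Proof. intros Hm Hs. unfold alpha. destruct excluded_middle_informative as [[p Hp]|]; auto.
 exfalso. destruct (Nat.le_gt_cases n p) as [l|l].
 - destruct (Nat.eq_dec n p) as [->|ne]. lra.
   pose proof (t_mono t Hm (2*n+1) (2*p+1) ltac:(lia)). lra.
 - destruct (Nat.eq_dec (2*p+2) (2*n)) as [E|ne].
   + rewrite E in Hp. lra.
   + pose proof (t_mono t Hm (2*p+2) (2*n) ltac:(lia)). lra. Qed.

Lemma alpha_neg t n s : t (2 * n + 1)%nat <= s <= t (2 * n + 2)%nat -> alpha t s = -1.
Proof. intros Hs. unfold alpha. destruct excluded_middle_informative as [_|C]; auto.
 exfalso; apply C; exists n; auto. Qed.

Lemma find_interval (t : nat -> R) : t O = 0 -> (forall n, t n < t (S n)) -> is_lim_seq t p_infty ->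
  forall s, 0 <= s -> exists n, t n <= s <= t (S n).
Proof. intros H0 Hm Hl s Hs. apply is_lim_seq_spec in Hl. destruct (Hl s) as [M HM].
 specialize (HM M (le_n M)). clear Hl. induction M.
 - lra.
 - destruct (Rle_dec (t M) s) as [l|l]. exists M; lra. apply IHM. lra. Qed.

Lemma partial_le_series (a : nat -> R) : (forall n, 0 <= a n) -> ex_series a ->
  forall n, sumR n a <= Series a.
Proof. intros Hp Hs.
 assert (Hsn : forall n, sumR (S n) a = sum_n a n).
 { induction n. simpl. rewrite sum_O. ring. rewrite sum_Sn. simpl sumR in *. rewrite <- IHn. unfold plus; simpl. ring. }
 assert (Hc : forall n, sum_n a n <= Series a).
 { apply is_lim_seq_incr_compare. apply Series_correct in Hs. exact Hs.
   intros n. rewrite sum_Sn. unfold plus; simpl. pose proof (Hp (S n)). lra. }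
 intros [|n]. simpl. pose proof (Hc O). rewrite sum_O in H. pose proof (Hp O). lra.
 rewrite Hsn. apply Hc. Qed.

Lemma global_bound (t : nat -> R) (g : R -> R) rho C Sd :
  t O = 0 -> (forall n, t n < t (S n)) -> is_lim_seq t p_infty ->
  0 <= rho -> 0 <= C -> (forall s, 0 <= g s) ->
  (forall n, sumR n (delta t) <= Sd) ->
  (forall n s, t (2 * n)%nat <= s <= t (2 * n + 1)%nat -> g s <= g (t (2 * n)%nat) * exp (- 2 * rho * (s - t (2 * n)%nat))) ->
  (forall n s, t (2 * n + 1)%nat <= s <= t (2 * n + 2)%nat -> g s <= g (t (2 * n + 1)%nat) * exp (C * (s - t (2 * n + 1)%nat))) ->
  forall s, 0 <= s -> g s <= g 0 * exp (- 2 * rho * s + (C + 2 * rho) * Sd).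
Proof.
  intros H0 Hm Hl Hr HC Hg HS Hpos Hneg.
  assert (Hd : forall n, 0 <= delta t n).
  { intros n. unfold delta. pose proof (t_mono t Hm (2*n+1) (2*n+2) ltac:(lia)). lra. }
  assert (Hev : forall n, g (t (2 * n)%nat) <= g 0 * exp (- 2 * rho * t (2 * n)%nat + (C + 2 * rho) * sumR n (delta t))).
  { induction n.
    - simpl. rewrite H0. replace (-2 * rho * 0 + (C + 2 * rho) * 0) with 0 by ring. rewrite exp_0. lra.
    - replace (2 * S n)%nat with (2 * n + 2)%nat by lia.
      pose proof (t_mono t Hm (2*n) (2*n+1) ltac:(lia)). pose proof (t_mono t Hm (2*n+1) (2*n+2) ltac:(lia)).
      pose proof (Hneg n (t (2 * n + 2)%nat) ltac:(lra)) as A.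
      pose proof (Hpos n (t (2 * n + 1)%nat) ltac:(lra)) as B.
      eapply Rle_trans; [apply A|].
      eapply Rle_trans; [apply Rmult_le_compat_r; [left; apply exp_pos|apply B]|].
      eapply Rle_trans; [apply Rmult_le_compat_r; [left; apply exp_pos|]; apply Rmult_le_compat_r; [left; apply exp_pos|apply IHn]|].
      rewrite !Rmult_assoc, <- !exp_plus. apply Rmult_le_compat_l. { pose proof (Hg 0); lra. }
      right. f_equal. simpl sumR. unfold delta. ring. }
  intros s Hs. destruct (find_interval t H0 Hm Hl s Hs) as [n Hn].
  destruct (Nat.Even_or_Odd n) as [[p ->]|[p ->]].
  - replace (S (2 * p)) with (2 * p + 1)%nat in Hn by lia.
    eapply Rle_trans; [apply Hpos; exact Hn|].
    eapply Rle_trans; [apply Rmult_le_compat_r; [left; apply exp_pos|apply Hev]|].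
    rewrite Rmult_assoc, <- exp_plus. apply Rmult_le_compat_l. { pose proof (Hg 0); lra. }
    apply exp_le.
    apply Rle_trans with (-2 * rho * s + (C + 2 * rho) * sumR p (delta t)); [right; ring|].
    pose proof (HS p). nra.
  - replace (S (2 * p + 1)) with (2 * p + 2)%nat in Hn by lia.
    pose proof (t_mono t Hm (2*p) (2*p+1) ltac:(lia)).
    eapply Rle_trans; [apply Hneg; exact Hn|].
    eapply Rle_trans; [apply Rmult_le_compat_r; [left; apply exp_pos|apply (Hpos p); lra]|].
    eapply Rle_trans; [apply Rmult_le_compat_r; [left; apply exp_pos|]; apply Rmult_le_compat_r; [left; apply exp_pos|apply Hev]|].
    rewrite !Rmult_assoc, <- !exp_plus. apply Rmult_le_compat_l. { pose proof (Hg 0); lra. }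
    pose proof (HS (S p)) as HSp. simpl sumR in HSp. change (delta t p) with (t (2*p+2)%nat - t (2*p+1)%nat) in HSp.
    assert (C * (s - t (2 * p + 1)%nat) <= C * (t (2 * p + 2)%nat - t (2 * p + 1)%nat)) by (apply Rmult_le_compat_l; lra).
    assert (2 * rho * (s - t (2 * p + 1)%nat) <= 2 * rho * (t (2 * p + 2)%nat - t (2 * p + 1)%nat)) by (apply Rmult_le_compat_l; lra).
    assert ((C + 2 * rho) * (sumR p (delta t) + (t (2 * p + 2)%nat - t (2 * p + 1)%nat)) <= (C + 2 * rho) * Sd) by (apply Rmult_le_compat_l; lra).
    apply exp_le. nra.
Qed.


Lemma rate N d psi t x s i j lo hi : (2 <= N)%nat -> (i < N)%nat -> (j < N)%nat ->
  Sqx d x s i j = G N d x s ->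
  (forall p l, (p < N)%nat -> (l < N)%nat -> lo <= psi (vdist d (x p s) (x l s)) <= hi) -> 0 <= lo ->
  (alpha t s = 1 -> dSq N d psi t x s i j <= -2 * lo * G N d x s) /\
  (alpha t s = -1 -> dSq N d psi t x s i j <= 4 * hi * G N d x s).
Proof. intros HN Hi Hj Heq Ha Hlo.
 assert (Hmax : forall l l', (l < N)%nat -> (l' < N)%nat -> Sq d (fun l k => x l s k) l l' <= Sq d (fun l k => x l s k) i j).
 { intros l l' Hl Hl'. change (Sqx d x s l l' <= Sqx d x s i j). rewrite Heq. apply Sqx_le_G; auto. }
 destruct (core_bound N d (alpha t s) (fun p l => psi (vdist d (x p s) (x l s))) (fun l k => x l s k) i j lo hi
   HN Hi Hj Hmax Ha Hlo) as [P1 P2].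
 change (Sq d (fun l k => x l s k) i j) with (Sqx d x s i j) in P1, P2. rewrite Heq in P1, P2.
 split; intros Hal; [exact (P1 Hal)|exact (P2 Hal)]. Qed.

Lemma diam_G N d x s : diam N d x s = sqrt (G N d x s).
Proof. unfold diam, G. rewrite <- maxR_sqrt.
 - apply maxR_ext; intros i Hi. rewrite <- maxR_sqrt. reflexivity. intros; apply Sq_nonneg.
 - intros; apply maxR_nonneg. Qed.

Lemma vdist_le_G N d x s p l : (p < N)%nat -> (l < N)%nat -> vdist d (x p s) (x l s) <= sqrt (G N d x s).
Proof. intros Hp Hl. change (sqrt (Sqx d x s p l) <= sqrt (G N d x s)). apply sqrt_le_1_alt. apply Sqx_le_G; auto. Qed.

Lemma vdist_nonneg d u v : 0 <= vdist d u v.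
Proof. apply sqrt_pos. Qed.

Theorem theorem5p2 :
  forall (psi : R -> R) (K : R) (t : nat -> R) (D0 psi0 c : R),
    (forall y, 0 < psi y) ->
    (forall y, continuous psi y) ->
    is_sup_norm psi K ->
    t O = 0 ->
    (forall n, t n < t (S n)) ->
    is_lim_seq t p_infty ->
    (forall n, delta t n < ln 2 / K) ->
    ex_series (delta t) ->
    is_min_on psi (M0 K t D0) psi0 ->
    is_lub (fun r => exists n, r = cterm K psi0 t n) c ->
    c < 1 ->
    exists gamma : R, 0 < gamma /\
      forall (N d : nat) (x : nat -> R -> nat -> R),
        (2 <= N)%nat -> (1 <= d)%nat ->
        is_solution N d psi t x ->
        diam N d x 0 = D0 ->
        exists T : R, 0 < T /\
          forall s, 0 <= s ->
            diam N d x s <= exp (- gamma * (s - ln 2 / K - T)) * diam N d x 0.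
Proof.
  intros psi K t D0 psi0 c Hpos Hcont Hsup Ht0 Hmono Hlim Hdelta Hser _ _ _.
  assert (HK : forall y, psi y <= K).
  { intros y. destruct Hsup as [Hub _]. eapply Rle_trans; [apply Rle_abs|]. apply Hub. exists y; reflexivity. }
  assert (HK0 : 0 < K) by (pose proof (Hpos 0); pose proof (HK 0); lra).
  assert (Hdnn : forall n, 0 <= delta t n).
  { intros n. unfold delta. pose proof (t_mono t Hmono (2*n+1) (2*n+2) ltac:(lia)). lra. }
  set (Sd := Series (delta t)).
  assert (HS : forall n, sumR n (delta t) <= Sd) by (apply partial_le_series; auto).
  assert (HS0 : 0 <= Sd) by (apply (HS O)).
  set (B := Rabs D0 * exp (2 * K * Sd)).
  assert (HB : 0 <= B) by (unfold B; apply Rmult_le_pos; [apply Rabs_pos|left; apply exp_pos]).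
  destruct (continuity_ab_min psi 0 B HB) as [mx [Hmx Hmxr]].
  { intros y _. apply continuity_pt_filterlim. apply Hcont. }
  set (m := psi mx). assert (Hm : 0 < m) by apply Hpos.
  exists m. split; auto.
  intros N d x HN Hd [Hc0 Hder] HD0.
  assert (HC : forall l k, (l < N)%nat -> (k < d)%nat -> forall s, 0 <= s -> Cw (fun u => x l u k) s).
  { intros l k Hl Hk s Hs. apply Cw_of_filterlim. apply Hc0; auto. }
  set (g := G N d x).
  assert (Hg0 : g 0 = D0 ^ 2).
  { rewrite <- HD0, diam_G. fold g. simpl. rewrite Rmult_1_r, sqrt_sqrt; auto. apply G_nonneg. }
  assert (HD0p : 0 <= D0) by (rewrite <- HD0, diam_G; apply sqrt_pos).
  assert (Hder_pos : forall n l k, (l < N)%nat -> (k < d)%nat -> forall s, t (2*n)%nat < s < t (2*n+1)%nat ->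
      is_derive (fun u => x l u k) s (rhs N d psi t x l s k)).
  { intros n l k Hl Hk s Hs. apply (Hder (2*n)%nat); auto. replace (S (2*n)) with (2*n+1)%nat by lia. auto. }
  assert (Hder_neg : forall n l k, (l < N)%nat -> (k < d)%nat -> forall s, t (2*n+1)%nat < s < t (2*n+2)%nat ->
      is_derive (fun u => x l u k) s (rhs N d psi t x l s k)).
  { intros n l k Hl Hk s Hs. apply (Hder (2*n+1)%nat); auto. replace (S (2*n+1)) with (2*n+2)%nat by lia. auto. }
  assert (Hle01 : forall n, 0 <= t (2*n)%nat <= t (2*n+1)%nat).
  { intros n. destruct n. simpl. rewrite Ht0. pose proof (Hmono O). simpl in *. lra.
    pose proof (t_mono t Hmono O (2 * S n) ltac:(lia)). pose proof (t_mono t Hmono (2 * S n) (2 * S n + 1) ltac:(lia)). lra. }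
  assert (Hle12 : forall n, 0 <= t (2*n+1)%nat <= t (2*n+2)%nat).
  { intros n. pose proof (t_mono t Hmono O (2 * n + 1) ltac:(lia)). pose proof (t_mono t Hmono (2 * n + 1) (2 * n + 2) ltac:(lia)). lra. }
  assert (Hneg : forall n s, t (2 * n + 1)%nat <= s <= t (2 * n + 2)%nat ->
      g s <= g (t (2 * n + 1)%nat) * exp ((4 * K) * (s - t (2 * n + 1)%nat))).
  { intros n s Hs. replace (4 * K) with (2 * (2 * K)) by ring.
    apply (interval_bound N d psi t x _ (t (2 * n + 2)%nat)); auto.
    { intros l k Hl Hk v Hv. apply (Hder_neg n); auto. }
    intros v Hv i j Hi Hj Heq.
    destruct (rate N d psi t x v i j 0 K HN Hi Hj Heq) as [_ P]; [|lra|].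
    { intros p l Hp Hl. split; [left; apply Hpos|apply HK]. }
    replace (2 * (2 * K) * G N d x v) with (4 * K * G N d x v) by ring. apply P.
    apply (alpha_neg t n). lra. }
  assert (Hpos0 : forall n s, t (2 * n)%nat <= s <= t (2 * n + 1)%nat ->
      g s <= g (t (2 * n)%nat) * exp (- 2 * 0 * (s - t (2 * n)%nat))).
  { intros n s Hs. replace (-2 * 0) with (2 * 0) by ring.
    apply (interval_bound N d psi t x _ (t (2 * n + 1)%nat)); auto.
    { intros l k Hl Hk v Hv. apply (Hder_pos n); auto. }
    intros v Hv i j Hi Hj Heq.
    destruct (rate N d psi t x v i j 0 K HN Hi Hj Heq) as [P _]; [|lra|].
    { intros p l Hp Hl. split; [left; apply Hpos|apply HK]. }
    replace (2 * 0 * G N d x v) with (-2 * 0 * G N d x v) by ring. apply P.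
    apply (alpha_pos t n); auto. }
  assert (Hgnn : forall s, 0 <= g s) by (intros; apply G_nonneg).
  pose proof (global_bound t g 0 (4 * K) Sd Ht0 Hmono Hlim ltac:(lra) ltac:(lra) Hgnn HS Hpos0 Hneg) as Gl1.
  assert (HdB : forall s p l, 0 <= s -> (p < N)%nat -> (l < N)%nat -> vdist d (x p s) (x l s) <= B).
  { intros s p l Hs Hp Hl. apply Rle_trans with (sqrt (g s)). { exact (vdist_le_G N d x s p l Hp Hl). }
    specialize (Gl1 s Hs). rewrite Hg0 in Gl1.
    replace (-2 * 0 * s + (4 * K + 2 * 0) * Sd) with ((2 * K * Sd) + (2 * K * Sd)) in Gl1 by ring.
    rewrite exp_plus in Gl1.
    replace (D0 ^ 2 * (exp (2 * K * Sd) * exp (2 * K * Sd))) with (B * B) in Gl1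
      by (unfold B; rewrite Rabs_right by lra; ring).
    apply Rle_trans with (sqrt (B * B)). { apply sqrt_le_1_alt. exact Gl1. }
    rewrite (sqrt_square B HB). apply Rle_refl. }
  assert (Hposm : forall n s, t (2 * n)%nat <= s <= t (2 * n + 1)%nat ->
      g s <= g (t (2 * n)%nat) * exp (- 2 * m * (s - t (2 * n)%nat))).
  { intros n s Hs. replace (-2 * m) with (2 * (- m)) by ring.
    apply (interval_bound N d psi t x _ (t (2 * n + 1)%nat)); auto.
    { intros l k Hl Hk v Hv. apply (Hder_pos n); auto. }
    intros v Hv i j Hi Hj Heq.
    destruct (rate N d psi t x v i j m K HN Hi Hj Heq) as [P _]; [|lra|].
    { intros p l Hp Hl. split; [|apply HK]. apply Hmx. split; [apply vdist_nonneg|pose proof (Hle01 n); apply HdB; auto; lra]. }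
    replace (2 * - m * G N d x v) with (-2 * m * G N d x v) by ring. apply P.
    apply (alpha_pos t n); auto. }
  pose proof (global_bound t g m (4 * K) Sd Ht0 Hmono Hlim ltac:(lra) ltac:(lra) Hgnn HS Hposm Hneg) as Gl2.
  exists ((2 * K + m) * Sd / m + 1). split.
  { assert (0 <= (2 * K + m) * Sd / m) by (apply Rdiv_le_0_compat; [apply Rmult_le_pos|]; lra). lra. }
  intros s Hs. rewrite HD0. rewrite diam_G. fold g.
  specialize (Gl2 s Hs). rewrite Hg0 in Gl2.
  assert (Hsq : D0 ^ 2 * exp (-2 * m * s + (4 * K + 2 * m) * Sd) =
     (D0 * exp (- m * s + (2 * K + m) * Sd)) * (D0 * exp (- m * s + (2 * K + m) * Sd))).
  { replace (-2 * m * s + (4 * K + 2 * m) * Sd) with ((- m * s + (2 * K + m) * Sd) + (- m * s + (2 * K + m) * Sd)) by ring.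
    rewrite exp_plus. ring. }
  rewrite Hsq in Gl2.
  assert (Hnn : 0 <= D0 * exp (- m * s + (2 * K + m) * Sd)) by (apply Rmult_le_pos; [lra|left; apply exp_pos]).
  eapply Rle_trans. { apply sqrt_le_1_alt. exact Gl2. }
  rewrite sqrt_square by auto. rewrite Rmult_comm. apply Rmult_le_compat_r; auto.
  apply exp_le.
  assert (Hln : 0 < ln 2) by (rewrite <- ln_1; apply ln_increasing; lra).
  assert (0 <= m * (ln 2 / K)) by (apply Rmult_le_pos; [lra|apply Rdiv_le_0_compat; lra]).
  assert (m * ((2 * K + m) * Sd / m) = (2 * K + m) * Sd) by (field; lra).
  nra.
Qed.
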